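(* Let $k\ge 2$, $w=2^k-1$, $v=2^{k-1}$. For $j\ge 1$ let $\tilde U_j$ be the sequence of $2^j-1$ jumps of length $1$ followed by one jump of length $2^j+2^{j-1}-1$, and let $\tilde U_j^R$ be its reverse. Let $$\tilde H = 2w+v,\ \tilde U_{k-1},\tilde U_{k-2},\dots,\tilde U_2,\ 1,\ 2w,\ \tilde U_1^R,\tilde U_2^R,\dots,\tilde U_{k-1}^R,\ v+1.$$ Consider a line of $3w+2$ cells indexed $0,\dots,3w+1$ in which cells $w,\dots,2w-1$ are blocked, the frog stands on cell $3w$, and all other cells are empty, except that one cell $p$ with even index $p\in\{0,2,\dots,w-1\}$ may be either empty or already visited. Then for every such even $p$ there is a valid execution of $\tilde H$ which never lands on cell $p$, visits every other empty cell exactly once, and ends with the frog on cell $3w+1$.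
   Context: A frog on a line of cells performs a given sequence of positive jump lengths; for each jump it chooses a direction, moving from position $q$ to $q+J$ or $q-J$. An execution is valid if every landing cell lies on the line, is not blocked, and has not been visited before (the starting cell and any cell marked as already visited count as visited). Cells are indexed from $0$. *)

(* Defs.v *)
From mathcomp Require Import all_boot all_order all_algebra.
Set Implicit Arguments. Unset Strict Implicit. Unset Printing Implicit Defensive.
Import Order.TTheory GRing.Theory Num.Theory.
Local Open Scope ring_scope.

Definition Ut (j : nat) : seq nat :=
  (nseq (2 ^ j - 1) 1%N ++ [:: (2 ^ j + 2 ^ j.-1 - 1)%N])%N.

Definition Ht (k : nat) : seq nat :=
  let w := (2 ^ k - 1)%N in
  let v := (2 ^ k.-1)%N in
  [:: (2 * w + v)%N]
  ++ flatten [seq Ut j | j <- rev (iota 2 (k - 2))]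
  ++ [:: 1%N; (2 * w)%N]
  ++ flatten [seq rev (Ut j) | j <- iota 1 (k - 1)]
  ++ [:: (v + 1)%N].

Fixpoint landings (q : int) (js : seq nat) (ds : seq bool) : seq int :=
  match js, ds with
  | j :: js', d :: ds' =>
      let q' := if d then q + j%:Z else q - j%:Z in q' :: landings q' js' ds'
  | _, _ => [::]
  end.

(* An execution (choice of directions ds for the jump sequence js, from start
   cell q) is valid on a line of L cells with blocked predicate blocked and
   initially visited cells vis0 (which include the start cell): every landing
   cell lies on the line, is not blocked, and has not been visited before. *)
Definition valid_exec (L : nat) (blocked : pred int) (vis0 : seq int)
    (q : int) (js : seq nat) (ds : seq bool) : Prop :=
  size ds = size js /\
  let ls := landings q js ds in
  (forall c, c \in ls -> (0 <= c) && (c < L%:Z)) /\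
  (forall c, c \in ls -> ~~ blocked c) /\
  (forall c, c \in ls -> c \notin vis0) /\
  uniq ls.

(* Main.v *)
Require Import Defs.
From mathcomp Require Import all_boot all_order all_algebra zify.
Import Order.TTheory GRing.Theory Num.Theory.
Local Open Scope ring_scope.

Definition step (q : int) (j : nat) (d : bool) : int :=
  if d then q + j%:Z else q - j%:Z.

Lemma landings_cons q j js d ds :
  landings q (j :: js) (d :: ds) = step q j d :: landings (step q j d) js ds.
Proof. by []. Qed.

Lemma landings_cat q js1 js2 ds1 ds2 : size ds1 = size js1 ->
  landings q (js1 ++ js2) (ds1 ++ ds2) =
  landings q js1 ds1 ++ landings (last q (landings q js1 ds1)) js2 ds2.
Proof.
elim: js1 q ds1 => [|j js IH] q [|d ds] //= [] Hs.
by rewrite IH.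
Qed.

Lemma size_landings q js ds : size ds = size js -> size (landings q js ds) = size js.
Proof. elim: js q ds => [|j js IH] q [|d ds] //= [] Hs. by rewrite IH. Qed.

Lemma landings_rcons q js ds j d : size ds = size js ->
  landings q (rcons js j) (rcons ds d) =
  rcons (landings q js ds) (step (last q (landings q js ds)) j d).
Proof. move=> Hs; by rewrite -!cats1 landings_cat. Qed.

Lemma landings_rev q js ds : size ds = size js ->
  landings (last q (landings q js ds)) (rev js) (rev (map negb ds)) =
  rev (belast q (landings q js ds)).
Proof.
elim: js q ds => [|j js IH] q [|d ds] //= [] Hs.
rewrite rev_cons rev_cons landings_rcons; last by rewrite size_rev size_map size_rev Hs.
rewrite IH // rev_cons; congr rcons.
have H : forall (y : int) (L : seq int), last (last y L) (rev (belast y L)) = y.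
  by move=> y [|a s] //=; rewrite rev_cons last_rcons.
rewrite H.
rewrite /step; case: d => /=; lia.
Qed.

Lemma units_true m q : let L := landings q (nseq m 1%N) (nseq m true) in
  uniq L /\ (forall z, (z \in L) = (q < z) && (z <= q + m%:Z)) /\ last q L = q + m%:Z.
Proof.
elim: m q => [|m IH] q /=; first by split => //; split => [z|]; [rewrite in_nil|]; lia.
have [U [M La]] := IH (q + 1%:Z).
rewrite /= U La; split; first (apply/andP; split => //); last split.
- rewrite M; lia.
- move=> z; rewrite in_cons M; lia.
- lia.
Qed.

Lemma units_false m q : let L := landings q (nseq m 1%N) (nseq m false) in
  uniq L /\ (forall z, (z \in L) = (q - m%:Z <= z) && (z < q)) /\ last q L = q - m%:Z.
Proof.
elim: m q => [|m IH] q /=; first by split => //; split => [z|]; [rewrite in_nil|]; lia.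
have [U [M La]] := IH (q - 1%:Z).
rewrite /= U La; split; first (apply/andP; split => //); last split.
- rewrite M; lia.
- move=> z; rewrite in_cons M; lia.
- lia.
Qed.
Definition F (n : nat) : seq nat := flatten [seq Ut j | j <- rev (iota 1 n)].

Lemma F_S n : F n.+1 = Ut n.+1 ++ F n.
Proof. by rewrite /F -(addn1 n) iotaD rev_cat /= add1n addn1. Qed.

Lemma size_Ut n : size (Ut n.+1) = (2 ^ n.+1 - 1).+1%N.
Proof. by rewrite /Ut size_cat size_nseq addn1. Qed.

Lemma FP n : forall (b : int) (p : nat), ~~ odd p -> (p < 2 ^ n.+1 - 1)%N ->
  exists ds, size ds = size (F n) /\
   let c := b + (2 ^ n - 1)%N%:Z in let L := landings c (F n) ds in
   uniq (c :: L) /\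
   (forall z, (z \in c :: L) = (b <= z) && (z < b + (2 ^ n.+1 - 1)%N%:Z)) /\
   last c L = b + p%:Z.
Proof.
elim: n => [|n IH] b p hp hpl.
  exists [::]; split => //=; rewrite expn1 expn0 in hpl *.
  have -> : p = 0%N by lia.
  split => //; split => [z|]; [rewrite in_cons in_nil|]; lia.
have h0 : (0 < 2 ^ n)%N by rewrite expn_gt0.
rewrite F_S /Ut /= !expnS in hpl IH *.
set h := (2 ^ n)%N in h0 hpl IH *.
have [hl|hr] := ltnP p (2 * h - 1).
- have [ds [Hs [U [M La]]]] := IH b p hp hl.
  exists (nseq (2 * h - 1) true ++ false :: ds); split.
    by rewrite -catA !size_cat /= Hs !size_nseq.
  set c := b + (2 * h - 1)%N%:Z.
  rewrite -catA landings_cat; last by rewrite !size_nseq.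
  have [U1 [M1 La1]] := units_true (2 * h - 1) c.
  rewrite La1 /= -/(step _ _ false).
  have Hc' : step (c + (2 * h - 1)%N%:Z) (2 * h + h - 1) false = b + (h - 1)%N%:Z.
    rewrite /step /c; lia.
  rewrite Hc'.
  split; last split.
  + have U2 : uniq (b + (h - 1)%N%:Z :: landings (b + (h - 1)%N%:Z) (F n) ds) by [].
    rewrite cat_uniq U1 U2 andbT mem_cat M1 M negb_or.
    apply/andP; split; first by rewrite /c; lia.
    apply/hasPn => z; rewrite M M1 /c; lia.
  + move=> z; rewrite in_cons mem_cat M M1 /c; lia.
  + by rewrite last_cat.
- have hne : p != (2 * h - 1)%N.
    apply/eqP => E; move: hp; rewrite E oddB ?odd_double //; lia.
  have hp' : ~~ odd (p - 2 * h).
    by rewrite oddB ?odd_double ?addbF //; lia.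
  have hpl' : (p - 2 * h < 2 * h - 1)%N by lia.
  have [ds [Hs [U [M La]]]] := IH (b + (2 * h)%N%:Z) (p - 2 * h)%N hp' hpl'.
  exists (nseq (2 * h - 1) false ++ true :: ds); split.
    by rewrite -catA !size_cat /= Hs !size_nseq.
  set c := b + (2 * h - 1)%N%:Z.
  rewrite -catA landings_cat; last by rewrite !size_nseq.
  have [U1 [M1 La1]] := units_false (2 * h - 1) c.
  rewrite La1 /= -/(step _ _ true).
  have Hc' : step (c - (2 * h - 1)%N%:Z) (2 * h + h - 1) true = b + (2 * h)%N%:Z + (h - 1)%N%:Z.
    rewrite /step /c; lia.
  rewrite Hc'.
  split; last split.
  + have U2 : uniq (b + (2 * h)%N%:Z + (h - 1)%N%:Z :: landings (b + (2 * h)%N%:Z + (h - 1)%N%:Z) (F n) ds) by [].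
    rewrite cat_uniq U1 U2 andbT mem_cat M1 M negb_or.
    apply/andP; split; first by rewrite /c; lia.
    apply/hasPn => z; rewrite M M1 /c; lia.
  + move=> z; rewrite in_cons mem_cat M M1 /c; lia.
  + rewrite last_cat /= La; lia.
Qed.

Definition A (n : nat) : seq nat := flatten [seq Ut j | j <- rev (iota 2 n)].

Lemma F_split n : F n.+1 = rcons (A n ++ [:: 1%N]) 2%N.
Proof. by rewrite /F /A /= rev_cons map_rcons flatten_rcons -cats1 -catA. Qed.

Lemma revF n : rev (F n) = flatten [seq rev (Ut j) | j <- iota 1 n].
Proof. by rewrite /F rev_flatten -map_comp -map_rev revK. Qed.

Lemma Ht_eq n : Ht n.+2 =
  (2 * (2 ^ n.+2 - 1) + 2 ^ n.+1)%N :: (A n ++ [:: 1%N]) ++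
  (2 * (2 ^ n.+2 - 1))%N :: rev (F n.+1) ++ [:: (2 ^ n.+1 + 1)%N].
Proof. rewrite /Ht /= !subSS !subn0 revF -!catA /=. by []. Qed.

Lemma last_rev_belast (y : int) (L : seq int) : last (last y L) (rev (belast y L)) = y.
Proof. by case: L => [|a s] //=; rewrite rev_cons last_rcons. Qed.

Theorem mainTheorem9 (k : nat) (hk : (2 <= k)%N) (p : nat)
    (hp_even : ~~ odd p) (hp : (p < 2 ^ k - 1)%N) (p_visited : bool) :
  let w := (2 ^ k - 1)%N in
  let L := (3 * w + 2)%N in
  let blocked := fun c : int => (w%:Z <= c) && (c <= (2 * w - 1)%N%:Z) in
  let start := (3 * w)%N%:Z in
  let vis0 := start :: (if p_visited then [:: p%:Z] else [::]) in
  exists ds : seq bool,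
    valid_exec L blocked vis0 start (Ht k) ds /\
    let ls := landings start (Ht k) ds in
    p%:Z \notin ls /\
    (forall c : int, c \in ls <->
       [/\ 0 <= c, c < L%:Z, ~~ blocked c, c != start & c != p%:Z]) /\
    last start ls = (3 * w + 1)%N%:Z.
Proof.
move=> w L blocked start vis0.
rewrite {}/L {}/blocked {}/vis0 {}/start {}/w.
case: k hk hp => [|[|n]] // _ hp.
have [ds1 [Hs1 [U1 [M1 La1]]]] := FP (n.+1) 0 p hp_even hp.
move: U1 M1 La1; set c1 := 0 + _; rewrite F_split.
case/lastP: ds1 Hs1 => [|dsm d]; first by rewrite F_split size_rcons.
rewrite F_split !size_rcons => -[Hsm].
rewrite landings_rcons // last_rcons.
set Lm := landings c1 _ dsm; set y := last c1 Lm.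
move=> U1 M1 La1.
have hy : (0 <= y) && (y < (2 ^ n.+2 - 1)%N%:Z).
  have Hy := mem_last c1 Lm; rewrite -/y in_cons in Hy.
  rewrite -M1 in_cons mem_rcons in_cons.
  by case/orP: Hy => ->; rewrite ?orbT.
pose x := `|y|%N.
have yx : y = x%:Z by rewrite /x gez0_abs //; lia.
have h0 : (0 < 2 ^ n)%N by rewrite expn_gt0.
move: (hp) hy La1; rewrite !expnS; set h := (2 ^ n)%N => hp' hy La1.
have [hx hxl] : ~~ odd x /\ (x < 2 ^ n.+2 - 1)%N.
  rewrite !expnS -/h; move: La1; rewrite /step; case: (d) => La1.
  - have -> : x = (p - 2)%N by lia.
    split; last by lia.
    by rewrite oddB ?addbF //; lia.
  - have -> : x = (p + 2)%N by lia.
    split; last by lia.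
    by rewrite oddD addbF.
have [ds2 [Hs2 [U2 [M2 La2]]]] := FP (n.+1) (2 * (2 ^ n.+2 - 1))%N%:Z x hx hxl.
move: U2 M2 La2; set c2 := _ + _; set L2 := landings c2 _ ds2 => U2 M2 La2.
rewrite add0r in La1.
have Q1u : uniq (c1 :: Lm) by move: U1; rewrite -rcons_cons rcons_uniq => /andP[].
have Q1m : forall z, (z \in c1 :: Lm) = ((0 <= z) && (z < (2 ^ n.+2 - 1)%N%:Z)) && (z != p%:Z).
  move=> z; have := M1 z; rewrite -rcons_cons mem_rcons in_cons La1.
  move: U1; rewrite -rcons_cons rcons_uniq La1 => /andP[pn _].
  case: eqP => [->|_] E.
    by rewrite andbF; apply/negbTE.
  by rewrite andbT; move: E; rewrite add0r => <-.
set R := rev (belast c2 L2).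
have eq2 : c2 :: L2 = rcons (belast c2 L2) (last c2 L2) by rewrite lastI.
have Ru : uniq (last c2 L2 :: R).
  move: U2; rewrite eq2 rcons_uniq => /andP[a b].
  by rewrite cons_uniq mem_rev rev_uniq a b.
have Rm : forall z, (z \in last c2 L2 :: R) = (z \in c2 :: L2).
  by move=> z; rewrite eq2 mem_rcons !in_cons mem_rev.
exists (false :: dsm ++ true :: rev (map negb ds2) ++ [:: true]).
have LSeq : landings (3 * (2 ^ n.+2 - 1))%N%:Z (Ht n.+2)
     (false :: dsm ++ true :: rev (map negb ds2) ++ [:: true]) =
   (c1 :: Lm) ++ (last c2 L2 :: R) ++ [:: (3 * (2 ^ n.+2 - 1) + 1)%N%:Z].
  rewrite Ht_eq landings_cons.
  have -> : step (3 * (2 ^ n.+2 - 1))%N%:Z (2 * (2 ^ n.+2 - 1) + 2 ^ n.+1)%N false = c1.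
    rewrite /step /c1 !expnS -/h; lia.
  rewrite landings_cat // -/Lm -/y landings_cons.
  have -> : step y (2 * (2 ^ n.+2 - 1))%N true = last c2 L2.
    rewrite La2 /step yx; lia.
  rewrite landings_cat; last by rewrite size_rev size_map size_rev Hs2.
  rewrite landings_rev // -/R landings_cons /= last_rev_belast.
  congr (_ :: _ ++ _ :: _ ++ [:: _]).
  rewrite /step /c2 !expnS -/h; lia.
move: LSeq Q1m Rm M2 La2 hxl; rewrite !expnS -/h => LSeq Q1m Rm M2 La2 hxl.
have Mem : forall z, (z \in (c1 :: Lm) ++ (last c2 L2 :: R) ++ [:: (3 * (2 * (2 * h) - 1) + 1)%N%:Z])
   = ((0 <= z) && (z < (2 * (2 * h) - 1)%N%:Z) && (z != p%:Z))
     || ((2 * (2 * (2 * h) - 1))%N%:Z <= z) && (z < (3 * (2 * (2 * h) - 1))%N%:Z)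
     || (z == (3 * (2 * (2 * h) - 1) + 1)%N%:Z).
  move=> z; rewrite !mem_cat Q1m Rm M2 mem_seq1; lia.
have Uq : uniq ((c1 :: Lm) ++ (last c2 L2 :: R) ++ [:: (3 * (2 * (2 * h) - 1) + 1)%N%:Z]).
  rewrite cat_uniq Q1u cat_uniq Ru.
  apply/and3P; split => //.
    apply/hasPn => z; rewrite mem_cat mem_seq1 Rm M2 Q1m; lia.
  apply/and3P; split => //.
  apply/hasPn => z; rewrite mem_seq1 Rm M2; lia.
rewrite LSeq.
split; last split; last split.
- split.
    rewrite Ht_eq /= !size_cat /=.
rewrite (size_cat (rev _)) size_cat !size_rev size_map Hs2 Hsm size_cat /=; lia.
  cbv zeta; rewrite LSeq.
  split; last split; last split.
  + move=> z; rewrite Mem; lia.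
  + move=> z; rewrite Mem /=; lia.
  + move=> z; rewrite Mem; case: p_visited; rewrite !in_cons ?in_nil; lia.
  + exact: Uq.
- rewrite Mem; lia.
- move=> z; rewrite Mem; split => [H|[H1 H2 H3 H4 H5]]; first (split; lia).
  lia.
- by rewrite !last_cat.
Qed.
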